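(* Let $X=\{x_1,\dots,x_n\}$. Every partial shelling $\sigma_1,\dots,\sigma_m$ of the cross-polytope $O_n$ defines an isometric ordering of the corresponding vertices $c_1,\dots,c_m$ of the cube $2^X$, i.e. each set $\{c_1,\dots,c_j\}$, $1\le j\le m$, is isometric. Conversely, if $C\subseteq 2^X$ is an isometric class, then any ordering $c_1,\dots,c_m$ of $C$ in which every set $\{c_1,\dots,c_j\}$ is isometric defines (via the corresponding facets) a partial shelling of $O_n$.
   Context: Let $\pm X=\{+x_1,-x_1,\dots,+x_n,-x_n\}$. The $n$-dimensional cross-polytope $O_n$ is the simplicial complex on $\pm X$ whose facets are the $2^n$ sets $\sigma\subseteq\pm X$ containing exactly one of $+x_i,-x_i$ for each $i$. Facets correspond bijectively to subsets $c\subseteq X$ via $c=\{x_i:+x_i\in\sigma\}$. A partial shelling of $O_n$ is a sequence $\sigma_1,\dots,\sigma_m$ of distinct facets such that for every $2\le j\le m$, the family $2^{\sigma_j}\cap\bigcup_{i<j}2^{\sigma_i}$ is a pure simplicial complex whose inclusion-maximal sets all have size $n-1$ (equivalently: for all $i<j$ there is $k<j$ with $\sigma_i\cap\sigma_j\subseteq\sigma_k\cap\sigma_j$ and $|\sigma_k\cap\sigma_j|=n-1$). A class $C\subseteq 2^X$ is isometric if the graph on $C$ joining sets at Hamming distance $1$ is connected and its graph distance equals the Hamming distance $|c\Delta c'|$ for all $c,c'\in C$. *)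

(* Defs.v *)
From mathcomp Require Import all_boot.
Set Implicit Arguments. Unset Strict Implicit. Unset Printing Implicit Defensive.

(* X = {x_1,...,x_n} is modelled by 'I_n; the signed vertex set
   +-X by 'I_n * bool, where (i, true) = +x_i and (i, false) = -x_i. *)
Notation vtx n := ('I_n * bool)%type.

Definition is_facet n (sigma : {set vtx n}) : Prop :=
  forall i : 'I_n, ((i, true) \in sigma) (+) ((i, false) \in sigma).

(* Bijection facets <-> subsets of X. *)
Definition vertex_of n (sigma : {set vtx n}) : {set 'I_n} :=
  [set i | (i, true) \in sigma].
Definition facet_of n (c : {set 'I_n}) : {set vtx n} :=
  [set v | v.2 == (v.1 \in c)].

(* The complex 2^{sigma_j} cap U_{i<j} 2^{sigma_i}, for sigma_j = nth s j. *)
Definition prev_cplx n (s : seq {set vtx n}) (j : nat) (tau : {set vtx n}) : Prop :=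
  tau \subset nth set0 s j /\ exists2 i, i < j & tau \subset nth set0 s i.

Definition shelling_step n (s : seq {set vtx n}) (j : nat) : Prop :=
  forall tau, prev_cplx s j tau ->
    (forall tau', prev_cplx s j tau' -> tau \subset tau' -> tau' = tau) ->
    #|tau| = n.-1.

(* Partial shelling: distinct facets, and the condition for every 2 <= j <= m
   (0-based index j with 1 <= j < m). *)
Definition partial_shelling n (s : seq {set vtx n}) : Prop :=
  uniq s /\ (forall sigma, sigma \in s -> is_facet sigma) /\
  (forall j, 0 < j < size s -> shelling_step s j).

Definition hamming n (c c' : {set 'I_n}) : nat := #|(c :\: c') :|: (c' :\: c)|.
Definition adj n (c c' : {set 'I_n}) : bool := hamming c c' == 1.

Definition gpath n (C : {set {set 'I_n}}) (c c' : {set 'I_n}) (p : seq {set 'I_n}) : Prop :=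
  path (@adj n) c p /\ last c p = c' /\ all (fun x => x \in C) p.

Definition connected_cls n (C : {set {set 'I_n}}) : Prop :=
  forall c c', c \in C -> c' \in C -> exists p, gpath C c c' p.

Definition gdist_is n (C : {set {set 'I_n}}) (c c' : {set 'I_n}) (d : nat) : Prop :=
  (exists p, gpath C c c' p /\ size p = d) /\
  (forall p, gpath C c c' p -> d <= size p).

Definition isometric n (C : {set {set 'I_n}}) : Prop :=
  connected_cls C /\
  forall c c', c \in C -> c' \in C -> gdist_is C c c' (hamming c c').

(* Main.v *)
Require Import Defs.
From mathcomp Require Import all_boot zify.

Set Implicit Arguments. Unset Strict Implicit.
Section H.
Variable n : nat.
Implicit Types c d : {set 'I_n}.

Definition D c d := [set i | (i \in c) != (i \in d)].

Lemma hammingE c d : hamming c d = #|D c d|.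
Proof. rewrite /hamming; apply: eq_card => i; rewrite !inE;
  by case: (i \in c); case: (i \in d). Qed.

Lemma hammingC c d : hamming c d = hamming d c.
Proof. rewrite !hammingE; apply: eq_card => i; rewrite !inE;
  by case: (i \in c); case: (i \in d). Qed.

Lemma hammingxx c : hamming c c = 0.
Proof. rewrite hammingE; apply/eqP; rewrite cards_eq0; apply/eqP/setP=> i;
  by rewrite !inE eqxx. Qed.

Lemma hamming0 c d : hamming c d = 0 -> c = d.
Proof. rewrite hammingE => /eqP; rewrite cards_eq0 => /eqP H; apply/setP => i;
  move/setP: H => /(_ i); rewrite !inE; by case: (i \in c); case: (i \in d). Qed.

Lemma hamming_tri a b c : hamming a c <= hamming a b + hamming b c.
Proof.
rewrite !hammingE.
apply: leq_trans (subset_leq_card (_ : D a c \subset D a b :|: D b c)) _.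
  apply/subsetP=> i; rewrite !inE; by case: (i \in a); case: (i \in b); case: (i \in c).
by rewrite -cardsUI leq_addr.
Qed.

Lemma path_lb c c' p : path (@adj n) c p -> last c p = c' -> hamming c c' <= size p.
Proof.
elim: p c => [|x p IH] c /=; first by move=> _ ->; rewrite hammingxx.
case/andP=> /eqP Hcx Hp Hl.
apply: leq_trans (hamming_tri c x c') _.
by rewrite Hcx add1n ltnS; apply: IH.
Qed.

Lemma card_facetI c d : #|facet_of c :&: facet_of d| + hamming c d = n.
Proof.
have -> : facet_of c :&: facet_of d = (fun i => (i, i \in c)) @: ~: D c d.
  apply/setP => [[i b]]; rewrite !inE /=. apply/idP/imsetP.
  - move=> /andP[/eqP -> /eqP e]; exists i => //. by rewrite !inE e eqxx.
  - case=> i' Hi [-> ->]. move: Hi; rewrite !inE /= eqxx /=. by case: (i' \in c); case: (i' \in d).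
rewrite card_imset; last by move=> i1 i2 [].
by rewrite hammingE addnC cardsC card_ord.
Qed.

Lemma facet_ofK : cancel (@facet_of n) (@vertex_of n).
Proof. move=> c; apply/setP => i; rewrite !inE /=; by case: (i \in c). Qed.

Lemma vertex_ofK (sigma : {set vtx n}) : is_facet sigma -> facet_of (vertex_of sigma) = sigma.
Proof.
move=> H; apply/setP=> [[i b]]; rewrite !inE /=.
have := H i; case: b; case: ((i,true) \in sigma); case: ((i,false) \in sigma) => //.
Qed.

Lemma is_facet_facet_of c : is_facet (facet_of c).
Proof. move=> i; rewrite !inE /=; by case: (i \in c). Qed.

Definition Inc (ci cj ck : {set 'I_n}) :=
  forall y, (y \in ci) = (y \in cj) -> (y \in ck) = (y \in cj).

Lemma facet_inc ci cj ck : Inc ci cj ck -> facet_of cj :&: facet_of ci \subset facet_of ck.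
Proof.
move=> H; apply/subsetP=> [[y b]]; rewrite !inE /= => /andP[/eqP e1 /eqP e2].
rewrite H; [by rewrite e1 | by rewrite -e1 -e2].
Qed.

Lemma inc_facet ci cj ck : facet_of cj :&: facet_of ci \subset facet_of ck -> Inc ci cj ck.
Proof.
move=> /subsetP H y e.
have : (y, y \in cj) \in facet_of ck by apply: H; rewrite !inE /= eqxx e eqxx.
by rewrite inE /= => /eqP ->.
Qed.

Lemma inc_lt ci cj ck : hamming cj ck = 1 -> Inc ci cj ck -> hamming ck ci < hamming cj ci.
Proof.
rewrite !hammingE => h1 I.
have [x Hx] : exists x, x \in D cj ck by apply/set0Pn; rewrite -card_gt0 h1.
apply: proper_card; apply/properP; split.
  apply/subsetP => y; rewrite !inE => Hy; apply/negP => /eqP e.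
  have := I y (esym e). move: Hy; rewrite -e. by case: (y \in ck); case: (y \in cj).
exists x; have Ix := I x; move: Hx Ix; rewrite !inE;
  case: (x \in ci); case: (x \in cj); case: (x \in ck) => //= _ /(_ erefl) //.
Qed.

Lemma lt_inc ci cj ck : hamming cj ck = 1 -> hamming ck ci < hamming cj ci -> Inc ci cj ck.
Proof.
move=> h1 hl y e; apply/eqP; apply: contraTT hl => ne.
rewrite -leqNgt !hammingE; apply: subset_leq_card.
move: h1; rewrite hammingE => /eqP/cards1P [x0 Hx0].
have yin : y \in D cj ck by rewrite inE eq_sym.
rewrite Hx0 inE in yin; move/eqP: yin => yx.
apply/subsetP => z; rewrite !inE => Hz.
have [zy|zy] := eqVneq z y; first by rewrite zy e eqxx in Hz.
have : z \notin D cj ck by rewrite Hx0 inE -yx.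
by rewrite inE negbK => /eqP <-.
Qed.

End H.

Lemma in_takeP {T : eqType} (x0 : T) (s : seq T) j x :
  x \in take j s -> exists a, [/\ a < j, a < size s & x = nth x0 s a].
Proof.
move=> H; exists (index x s); split; first exact: index_ltn.
  by rewrite index_mem (mem_take H).
by rewrite nth_index // (mem_take H).
Qed.

Lemma nth_in_take (T : eqType) (x0 : T) (s : seq T) j a :
  a < j -> a < size s -> nth x0 s a \in take j s.
Proof.
move=> Haj Has; rewrite -(nth_take x0 Haj); apply: mem_nth.
by rewrite size_take_min leq_min Haj Has.
Qed.

Lemma take_mono (T : eqType) (s : seq T) j x : x \in take j s -> x \in take j.+1 s.
Proof. by rewrite -(take_takel s (leqnSn j)) => /mem_take. Qed.

Lemma part2 n (C : {set {set 'I_n}}) (cs : seq {set 'I_n}) : uniq cs ->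
  (forall j, 1 <= j <= size cs -> isometric [set c in take j cs]) ->
  partial_shelling (map (@facet_of n) cs).
Proof.
move=> Hu Hpre; split; first by rewrite (map_inj_uniq (can_inj (@facet_ofK n))).
split; first by move=> sigma /mapP [c _ ->]; exact: is_facet_facet_of.
move=> j /andP[j0 js]; rewrite size_map in js.
move=> tau [Htj [i ij Hti]] Hmax.
have iS : i < size cs by apply: ltn_trans js.
rewrite (nth_map set0) // in Htj. rewrite (nth_map set0) // in Hti.
set cj := nth set0 cs j in Htj *; set ci := nth set0 cs i in Hti *.
have [_ Hiso] := Hpre j.+1 js.
have cjin : cj \in [set c in take j.+1 cs] by rewrite inE nth_in_take.
have ciin : ci \in [set c in take j.+1 cs] by rewrite inE nth_in_take // ltnW.
have [[p [[Hp [Hl Hall]] Hsz]] _] := Hiso cj ci cjin ciin.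
have hpos : 0 < hamming cj ci.
  rewrite lt0n; apply/negP => /eqP/hamming0 /eqP.
  by rewrite nth_uniq // => /eqP e; rewrite e ltnn in ij.
case: p Hp Hl Hall Hsz => [|x p'] /=; first by move=> _ _ _ e; rewrite -e in hpos.
move=> /andP[/eqP hx Hp'] Hl /andP[xin _] Hsz.
rewrite inE in xin; have [k [kj ks xk]] := @in_takeP _ set0 _ _ _ xin.
have kj' : k < j.
  rewrite ltn_neqAle -ltnS kj andbT; apply/eqP => e.
  by move: hx; rewrite xk e hammingxx.
have lb := path_lb Hp' Hl.
have hlt : hamming x ci < hamming cj ci by rewrite -Hsz ltnS.
have inc := facet_inc (lt_inc hx hlt).
have Ptau' : prev_cplx (map (@facet_of n) cs) j (facet_of cj :&: facet_of x).
  split; first by rewrite (nth_map set0) // subsetIl.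
  by exists k => //; rewrite (nth_map set0) // -xk subsetIr.
have sub : tau \subset facet_of cj :&: facet_of x.
  rewrite subsetI Htj /=; apply: subset_trans inc; by rewrite subsetI Htj Hti.
rewrite -(Hmax _ Ptau' sub).
have e := card_facetI cj x; rewrite hx in e.
have n0 : 0 < n by rewrite -e addn1.
by apply/eqP; rewrite -(eqn_add2r 1) e addn1 prednK.
Qed.

Lemma arith1 m h N t : t = N.-1 -> t <= m -> m + h = N -> h != 0 -> h = 1.
Proof. move=> -> ? e ?; subst N; lia. Qed.

Section P1.
Variable n : nat.
Variable s : seq {set vtx n}.
Hypothesis Hs : partial_shelling s.
Let vv a := vertex_of (nth set0 s a).

Lemma step1 j i : 0 < j < size s -> i < j -> exists k,
  [/\ k < j, hamming (vv j) (vv k) = 1 & hamming (vv k) (vv i) < hamming (vv j) (vv i)].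
Proof.
case: Hs => Hu [Hf Hst] /andP[j0 js] ij.
have iS : i < size s by apply: ltn_trans js.
have E a : a < size s -> facet_of (vv a) = nth set0 s a.
  by move=> aS; apply: vertex_ofK; apply: Hf; apply: mem_nth.
pose Pb := fun tau : {set vtx n} => (tau \subset nth set0 s j) &&
   has (fun i => tau \subset nth set0 s i) (iota 0 j).
have prevP t : prev_cplx s j t <-> Pb t.
  split.
    case=> a [i' lt b]; rewrite /Pb a /=; apply/hasP; exists i' => //.
    by rewrite mem_iota.
  case/andP=> a /hasP [i' Hi' b]; split => //; exists i' => //.
  by move: Hi'; rewrite mem_iota.
have P0 : Pb (nth set0 s j :&: nth set0 s i).
  rewrite /Pb subsetIl /=; apply/hasP; exists i; first by rewrite mem_iota.
  exact: subsetIr.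
case: (maxset_exists P0) => tau /maxsetP [Ptau Hmax] Hsub.
have Hcard : #|tau| = n.-1.
  apply: (Hst j); first by rewrite j0 js.
    by apply/prevP.
  by move=> t' /prevP Ht' Hs'; apply: Hmax.
case/andP: Ptau => Htj /hasP [k Hk Htk]; rewrite mem_iota /= in Hk.
have ks : k < size s by apply: ltn_trans js.
exists k.
have hjk : hamming (vv j) (vv k) = 1.
  have hne : hamming (vv j) (vv k) != 0.
    apply/negP => /eqP/hamming0 e.
    have : nth set0 s j == nth set0 s k by rewrite -E // -E // e.
    by rewrite nth_uniq // => /eqP e'; rewrite e' ltnn in Hk.
  have Hle : #|tau| <= #|facet_of (vv j) :&: facet_of (vv k)|.
    by apply: subset_leq_card; rewrite subsetI E // E // Htj Htk.
  exact: (arith1 Hcard Hle (card_facetI _ _) hne).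
split => //.
apply: inc_lt => //; apply: inc_facet.
rewrite E // E // E //; apply: subset_trans Hsub _; exact: Htk.
Qed.


Lemma part1 j : j <= size s -> forall a b, a < j -> b < j -> exists p,
  [/\ path (@adj n) (vv a) p, last (vv a) p = vv b,
      all (fun x => x \in take j (map (@vertex_of n) s)) p &
      size p = hamming (vv a) (vv b)].
Proof.
elim: j => [|j IH] Hj a b //.
have IH' := IH (ltnW Hj).
have vin c : c < j.+1 -> vv c \in take j.+1 (map (@vertex_of n) s).
  move=> cj; rewrite /vv -(nth_map set0 set0) ?nth_in_take ?size_map //;
  by apply: leq_trans Hj.
rewrite ltnS leq_eqVlt => /orP[/eqP ea|aj]; rewrite ltnS leq_eqVlt => /orP[/eqP eb|bj].
- by exists [::]; rewrite ea eb hammingxx.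
- subst a.
  have jS : 0 < j < size s by rewrite Hj andbT; apply: leq_ltn_trans (leq0n b) bj.
  have [k [kj hjk hlt]] := step1 jS bj.
  have [p [P1 P2 P3 P4]] := IH' k b kj bj.
  have Pp : path (@adj n) (vv j) (vv k :: p) by rewrite /= /adj hjk eqxx P1.
  have Lp : last (vv j) (vv k :: p) = vv b by exact: P2.
  exists (vv k :: p); split => //.
  + rewrite /= vin ?(ltn_trans kj) //=; apply: sub_all P3 => x; exact: take_mono.
  + apply/eqP; rewrite eqn_leq (path_lb Pp Lp) andbT /= P4 //.
- subst b.
  have jS : 0 < j < size s by rewrite Hj andbT; apply: leq_ltn_trans (leq0n a) aj.
  have [k [kj hjk hlt]] := step1 jS aj.
  have [p [P1 P2 P3 P4]] := IH' a k aj kj.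
  have Pp : path (@adj n) (vv a) (rcons p (vv j)).
    by rewrite rcons_path P1 P2 /adj hammingC hjk.
  exists (rcons p (vv j)); split => //.
  + by rewrite last_rcons.
  + rewrite all_rcons vin //=; apply: sub_all P3 => x; exact: take_mono.
  + have Lp : last (vv a) (rcons p (vv j)) = vv j by rewrite last_rcons.
    apply/eqP; rewrite eqn_leq (path_lb Pp Lp) andbT size_rcons P4.
    by rewrite hammingC (hammingC (vv a)).
- have [p [P1 P2 P3 P4]] := IH' a b aj bj.
  exists p; split => //; apply: sub_all P3 => x; exact: take_mono.
Qed.

End P1.

Theorem proposition4p3 (n : nat) :
  (forall s : seq {set vtx n}, partial_shelling s ->
     forall j, 1 <= j <= size s ->
       isometric [set c in take j (map (@vertex_of n) s)]) /\
  (forall (C : {set {set 'I_n}}), isometric C ->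
     forall cs : seq {set 'I_n}, uniq cs -> (forall c, c \in C = (c \in cs)) ->
       (forall j, 1 <= j <= size cs -> isometric [set c in take j cs]) ->
       partial_shelling (map (@facet_of n) cs)).
Proof.
split.
- move=> s Hs j /andP[j1 js].
  set C := [set c in take j (map (@vertex_of n) s)].
  have mem c : c \in C -> exists a, [/\ a < j, a < size s & c = vertex_of (nth set0 s a)].
    rewrite inE => /(@in_takeP _ set0) [a [aj as' ->]]; rewrite size_map in as'.
    by exists a; rewrite (nth_map set0).
  have geo c c' : c \in C -> c' \in C -> exists p, gpath C c c' p /\ size p = hamming c c'.
    move=> /mem [a [aj as' ->]] /mem [b [bj bs ->]].
    have [p [P1 P2 P3 P4]] := part1 Hs js aj bj.
    exists p; split => //; split => //; split => //.
    by apply: sub_all P3 => x xin; rewrite inE.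
  split.
  + by move=> c c' Hc Hc'; have [p [Hp _]] := geo c c' Hc Hc'; exists p.
  + move=> c c' Hc Hc'; split; first exact: geo.
    by move=> p [P1 [P2 _]]; exact: path_lb P1 P2.
- by move=> C _ cs Hu _ Hpre; exact: part2 Hu Hpre.
Qed.
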